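(* Let $l_1\geq l_2\geq 3$ be integers. Let $U_1(l_1,l_2)$ be the graph obtained from the cycle $C_{l_1}$ by attaching a pendent path of length $l_2$ at a vertex $u$ of the cycle, and $U_2(l_1,l_2)$ the graph obtained from the cycle $C_{l_2}$ by attaching a pendent path of length $l_1$ at a vertex $v$ of the cycle. Then $$n(U_1(l_1,l_2))\geq n(U_2(l_1,l_2))\quad\text{and}\quad n(u,U_1(l_1,l_2))\geq n(v,U_2(l_1,l_2)),$$ with equality if and only if $l_1=l_2$.
   Context: A pendent path of length $\ell$ attached at $w$ consists of $\ell$ new vertices $x_1,\dots,x_\ell$ and edges $wx_1,\dots,x_{\ell-1}x_\ell$. A subtree of a graph $G$ is a subgraph that is a tree (distinguished as subgraphs); $n(G)$ is the number of subtrees of $G$, counting also the empty subtree, and $n(x,G)$ is the number of subtrees of $G$ containing the vertex $x$. *)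

(* Defs.v *)
From HB Require Import structures.
From mathcomp Require Import all_boot.
From mathcomp Require Import boolp.

Set Implicit Arguments.
Unset Strict Implicit.
Unset Printing Implicit Defensive.

Section Subtrees.
Variable V : finType.

(* A simple graph on V is given by its edge set E, a set of 2-subsets of V. *)

Definition adjE (F : {set {set V}}) : rel V := fun x y => [set x; y] \in F.

Definition has_cycle (F : {set {set V}}) : Prop :=
  exists (x : V) (p : seq V),
    [/\ uniq (x :: p), 2 <= size p, path (adjE F) x p & adjE F (last x p) x].

Definition is_subgraph (E : {set {set V}}) (S : {set V}) (F : {set {set V}}) : bool :=
  (F \subset E) && [forall e in F, e \subset S].

Definition is_tree (S : {set V}) (F : {set {set V}}) : Prop :=
  [/\ S != set0, {in S &, forall x y, connect (adjE F) x y} & ~ has_cycle F].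

Definition subtrees (E : {set {set V}}) : {set {set V} * {set {set V}}} :=
  [set SF | is_subgraph E SF.1 SF.2 && `[< is_tree SF.1 SF.2 >]].

(* n(G): number of subtrees, counting also the empty subtree *)
Definition n_sub (E : {set {set V}}) : nat := #|subtrees E| + 1.

Definition n_sub_at (E : {set {set V}}) (x : V) : nat :=
  #|[set SF in subtrees E | x \in SF.1]|.

End Subtrees.

(* Cycle C_a on vertices 0..a-1 (edges i ~ i+1 mod a), with a pendent path of
   length b attached at vertex 0: new vertices a, ..., a+b-1, edges 0 ~ a and
   a+k ~ a+k+1. Vertex type 'I_(a+b). *)
Definition cpp_adj (a b x y : nat) : bool :=
  [|| [&& x < a, y < a & y == x.+1 %% a],
      [&& x == 0, y == a & 0 < b] |
      [&& a <= x, y == x.+1 & y < a + b]].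

Definition cpp_edges (a b : nat) : {set {set 'I_(a + b)}} :=
  [set e : {set 'I_(a + b)} | [exists x : 'I_(a + b), exists y : 'I_(a + b),
     (e == [set x; y]) && cpp_adj a b x y]].

(* Main.v *)
Require Import Defs.
From mathcomp Require Import all_boot boolp zify.
Set Implicit Arguments. Unset Strict Implicit. Unset Printing Implicit Defensive.

Lemma inSet (T0 : finType) (A : {set T0}) (P : pred T0) x :
  (x \in [set y in A | P y]) = (x \in A) && P x.
Proof. by rewrite inE. Qed.

Section Gen.
Variable V : finType.
Implicit Types (E F : {set {set V}}) (S : {set V}).

Lemma adjE_sym F : symmetric (adjE F).
Proof. by move=> x y; rewrite /adjE setUC. Qed.

Lemma adjEC F x y : adjE F x y = adjE F y x.
Proof. exact: adjE_sym. Qed.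

Lemma connect_symF F x y : connect (adjE F) x y = connect (adjE F) y x.
Proof. exact: (sym_connect_sym (@adjE_sym F)). Qed.

Lemma connect_mono F F' x y :
  F \subset F' -> connect (adjE F) x y -> connect (adjE F') x y.
Proof. by move=> sFF'; apply: connect_sub => u v h; apply: connect1; apply: (subsetP sFF'). Qed.

Lemma conn_closed F (C : {set V}) x y :
  (forall u v, u \in C -> adjE F u v -> v \in C) -> x \in C ->
  connect (adjE F) x y -> y \in C.
Proof.
move=> cl xC /connectP [p pp ->]; elim: p x xC pp => //= z p IH x xC /andP [axz pz].
exact: IH (cl _ _ xC axz) pz.
Qed.

Definition restr F (C : {set V}) := [set f in F | f \subset C].

Lemma connect_restr F (C : {set V}) x y :
  (forall u v, u \in C -> adjE F u v -> v \in C) -> x \in C ->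
  connect (adjE F) x y -> connect (adjE (restr F C)) x y.
Proof.
move=> cl xC /connectP [p pp ->]; elim: p x xC pp => [|z p IH] x xC /=.
  by rewrite connect0.
case/andP=> axz pz; have zC := cl _ _ xC axz.
apply: connect_trans (IH _ zC pz); apply: connect1.
by rewrite /adjE inE; apply/andP; split => //; rewrite subUset !sub1set xC zC.
Qed.

Lemma path_restr (r r' : rel V) (C : {set V}) u s :
  (forall u v, u \in C -> r u v -> r' u v /\ v \in C) -> u \in C ->
  path r u s -> path r' u s.
Proof.
move=> h; elim: s u => //= z s IH u uC /andP [ruz ps].
have [-> zC] := h _ _ uC ruz; exact: IH zC ps.
Qed.

Definition cyc F (c : seq V) := [&& uniq c, 2 < size c & cycle (adjE F) c].

Lemma has_cycleP F : has_cycle F <-> exists c, cyc F c.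
Proof.
split.
- case=> x [p [u s pp lp]]; exists (x :: p).
  by rewrite /cyc u /= ltnS s /= rcons_path pp lp.
- case=> [[|x p]] //; rewrite /cyc /= => /and3P [u s]; rewrite rcons_path => /andP [pp lp].
  by exists x, p; split.
Qed.

Lemma cyc_mono F F' c : F \subset F' -> cyc F c -> cyc F' c.
Proof.
move=> sF /and3P [u s cc]; rewrite /cyc u s /=.
case: c cc {u s} => //= x p; apply: sub_path => a b; exact: (subsetP sF).
Qed.

Lemma has_cycle_mono F F' : F \subset F' -> has_cycle F -> has_cycle F'.
Proof. by move=> sF /has_cycleP [c /(cyc_mono sF) h]; apply/has_cycleP; exists c. Qed.

Lemma cyc_rot F c x : cyc F c -> x \in c -> exists p, cyc F (x :: p).
Proof.
move=> cc /rot_to [i p e]; exists p; rewrite -e; move: cc.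
by rewrite /cyc rot_uniq size_rot rot_cycle.
Qed.

Lemma subgraphP E S F :
  reflect (F \subset E /\ forall f, f \in F -> f \subset S) (is_subgraph E S F).
Proof.
apply: (iffP andP) => [[h /forallP h2]|[h h2]]; split => //.
  by move=> f fF; have := h2 f; rewrite fF.
by apply/forallP => f; apply/implyP; apply: h2.
Qed.

Lemma subtreesP E T :
  reflect (is_subgraph E T.1 T.2 /\ is_tree T.1 T.2) (T \in subtrees E).
Proof.
rewrite inE; apply: (iffP andP).
  by case=> h /asboolP t; split.
by case=> h t; split => //; apply/asboolP.
Qed.

Definition simple E := forall f, f \in E -> exists u v, u != v /\ f = [set u; v].
Definition iso E w := forall f, f \in E -> w \notin f.

Lemma single_tree E w : ([set w], set0) \in subtrees E.
Proof.
apply/subtreesP; split.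
  by apply/subgraphP; split; [exact: sub0set | move=> f; rewrite inE].
split => /=.
- by apply/set0Pn; exists w; rewrite inE.
- by move=> x y /set1P -> /set1P ->; exact: connect0.
- case/has_cycleP => [[|x [|z [|t p]]]] //; rewrite /cyc /= /adjE !inE /= ?andbF; by case.

Qed.

Lemma iso_tree E T w : simple E -> iso E w -> T \in subtrees E -> w \in T.1 ->
  T = ([set w], set0).
Proof.
case: T => S F sE iw /subtreesP [/subgraphP [sFE eS] [ne conn noc]] /= wS.
have Fw v : adjE F w v -> False.
  by move=> /(subsetP sFE) /iw; rewrite set21.
have S1 : S = [set w].
  apply/setP => v; rewrite inE; apply/idP/eqP => [vS|->//].
  have := conn _ _ wS vS; case/connectP => [[|z p]] /= ; first by move=> _ ->.
  by case/andP => /Fw.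
rewrite S1; congr pair; apply/setP => f; rewrite inE; apply/negbTE/negP => fF.
have [u [v [uv fe]]] := sE f (subsetP sFE _ fF).
have := eS _ fF; rewrite S1 fe subUset !sub1set !inE => /andP [/eqP hu /eqP hv].
by move: uv; rewrite hu hv eqxx.
Qed.

Lemma iso_notin E T w z : simple E -> iso E w -> T \in subtrees E -> z \in T.1 ->
  z != w -> w \notin T.1.
Proof.
move=> sE iw TE zT zw; apply/negP => wT.
by move: zT zw; rewrite (iso_tree sE iw TE wT) inE => ->.
Qed.

Definition Q E (P : pred {set V}) := #|[set T in subtrees E | P T.1]|.

Lemma eq_Q E P P' : P =1 P' -> Q E P = Q E P'.
Proof. by move=> h; rewrite /Q; apply: eq_card => T; rewrite !inSet h. Qed.

Lemma Q_isoP E w (P : pred {set V}) : simple E -> iso E w ->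
  Q E (fun S => (w \in S) && P S) = P [set w].
Proof.
move=> sE iw; rewrite /Q.
have -> : [set T in subtrees E | (w \in T.1) && P T.1] =
          if P [set w] then [set ([set w], set0)] else set0.
  apply/setP => T; rewrite inSet; apply/idP/idP.
    case/and3P => TE wT PT; have := iso_tree sE iw TE wT => eT.
    by move: PT; rewrite eT /= => ->; rewrite inE.
  case: ifP => Pw; last by rewrite inE.
  by rewrite inE => /eqP ->; rewrite single_tree /= set11 Pw.
by case: ifP; rewrite ?cards1 ?cards0.
Qed.

Lemma Q_all E : Q E (fun _ => true) = #|subtrees E|.
Proof. by rewrite /Q; apply: eq_card => T; rewrite !inSet andbT. Qed.

Lemma sub_mono E E' T : E \subset E' -> T \in subtrees E -> T \in subtrees E'.
Proof.
move=> sE /subtreesP [/subgraphP [h1 h2] t]; apply/subtreesP; split => //.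
by apply/subgraphP; split => //; apply: subset_trans sE.
Qed.

Lemma Q_empty : #|subtrees (set0 : {set {set V}})| = #|V|.
Proof.
have sE : simple set0 by move=> f; rewrite inE.
have -> : subtrees set0 = [set ([set v], set0) | v : V].
  apply/setP => T; apply/idP/imsetP.
    move=> TE; have /set0Pn [v vT] : T.1 != set0 by case/subtreesP: TE => _ [].
    by exists v => //; apply: iso_tree TE vT => // f; rewrite inE.
  by case=> v _ ->; apply: single_tree.
by rewrite card_imset // => u v [/setP /(_ u)]; rewrite !inE eqxx => /esym/eqP.
Qed.

End Gen.


Section Close.
Variable V : finType.
Implicit Types (E F : {set {set V}}) (S : {set V}).
Definition tp := ({set V} * {set {set V}})%type.

Definition Pairs E x y := [set TT : tp * tp | [&& TT.1 \in subtrees E, TT.2 \in subtrees E,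
   x \in TT.1.1, y \in TT.2.1 & [disjoint TT.1.1 & TT.2.1]]].
Definition J (x y : V) (TT : tp * tp) : tp :=
  (TT.1.1 :|: TT.2.1, [set x; y] |: (TT.1.2 :|: TT.2.2)).
Definition D (x y : V) (T : tp) : tp * tp :=
  let F' := T.2 :\ [set x; y] in
  let A := [set v | connect (adjE F') x v] in
  let B := [set v | connect (adjE F') y v] in
  ((A, restr F' A), (B, restr F' B)).

Lemma closed_pair S1 S2 F1 F2 u v :
  (forall f, f \in F1 -> f \subset S1) -> (forall f, f \in F2 -> f \subset S2) ->
  [disjoint S1 & S2] -> u \in S1 -> adjE (F1 :|: F2) u v -> adjE F1 u v /\ v \in S1.
Proof.
move=> e1 e2 dis uS; rewrite /adjE inE => /orP [h|h].
  by split=> //; have := e1 _ h; rewrite subUset !sub1set => /andP [_ ->].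
have := e2 _ h; rewrite subUset sub1set => /andP [uS2 _].
by rewrite (disjointFr dis uS) in uS2.
Qed.

Lemma cyc_restr S1 S2 F1 F2 h p :
  (forall f, f \in F1 -> f \subset S1) -> (forall f, f \in F2 -> f \subset S2) ->
  [disjoint S1 & S2] -> h \in S1 -> cyc (F1 :|: F2) (h :: p) -> cyc F1 (h :: p).
Proof.
move=> e1 e2 dis hS /and3P [u s cy]; rewrite /cyc u s /=.
by apply: (path_restr (C := S1)) cy => // a b aS ab; apply: (closed_pair e1 e2 dis aS ab).
Qed.

Lemma cyc_through x y S1 S2 F1 F2 c :
  x \in S1 -> y \in S2 -> [disjoint S1 & S2] ->
  (forall f, f \in F1 -> f \subset S1) -> (forall f, f \in F2 -> f \subset S2) ->
  ~ has_cycle F1 -> x \in c -> cyc ([set x; y] |: (F1 :|: F2)) c -> False.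
Proof.
move=> xS yS dis e1 e2 nc xc cc.
have [p cp] := cyc_rot cc xc.
have cl1 u v : u \in S1 -> adjE (F1 :|: F2) u v -> v \in S1.
  by move=> uS h; case: (closed_pair e1 e2 dis uS h).
have cl2 u v : u \in S2 -> adjE (F1 :|: F2) u v -> v \in S2.
  move=> uS; rewrite setUC => h.
  have dis' : [disjoint S2 & S1] by rewrite disjoint_sym.
  by case: (closed_pair e2 e1 dis' uS h).
have step u v : u != x -> v != x -> adjE ([set x; y] |: (F1 :|: F2)) u v ->
    adjE (F1 :|: F2) u v.
  move=> ux vx; rewrite /adjE in_setU1 => /orP [/eqP h|//].
  have : x \in [set u; v] by rewrite h set21.
  by rewrite in_set2 eq_sym (negbTE ux) eq_sym (negbTE vx).
have stepx v : v != y -> v != x -> adjE ([set x; y] |: (F1 :|: F2)) x v ->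
    adjE (F1 :|: F2) x v.
  move=> vy vx; rewrite /adjE in_setU1 => /orP [/eqP h|//].
  have : v \in [set x; y] by rewrite -h set22.
  by rewrite in_set2 (negbTE vy) (negbTE vx).
move: cp; rewrite /cyc => /and3P [u s cy].
case: p u s cy => [|p1 p'] //= u s; rewrite rcons_path => /and3P [axp1 pin apm].
case: p' u s pin apm => [|p2 p''] //= u s pin apm.
set pm := last p2 p'' in apm *.
move: u; rewrite !inE !negb_or => /andP [/and3P [xp1 xp2 xp''] /and3P [/andP [p1p2 p1p''] u2 u3]].
have pmin : pm \in p2 :: p'' by apply: mem_last.
have pm1 : pm != p1.
  by apply/eqP => e; move: pmin; rewrite e inE (negbTE p1p2) (negbTE p1p'').
have pmx : pm != x.
  by apply/eqP => e; move: pmin; rewrite e inE (negbTE xp2) (negbTE xp'').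
have pin' : path (adjE (F1 :|: F2)) p1 (p2 :: p'').
  have hs : {in predC1 x &, subrel (adjE ([set x; y] |: (F1 :|: F2))) (adjE (F1 :|: F2))}.
    by move=> a b /= ax bx; apply: step.
  have ha : all (predC1 x) (p1 :: p2 :: p'').
    apply/allP => z; rewrite inE => /orP [/eqP ->|zp]; first by rewrite /= eq_sym.
    by apply/eqP => e; move: zp; rewrite e inE (negbTE xp2) (negbTE xp'').
  exact: (sub_in_path hs ha pin).
have con : connect (adjE (F1 :|: F2)) p1 pm by apply/connectP; exists (p2 :: p'').
have xp1' : p1 != x by rewrite eq_sym.
case: (eqVneq p1 y) => [e1y|p1y].
  have p1S2 : p1 \in S2 by rewrite e1y.
  have pmS2 : pm \in S2 := conn_closed cl2 p1S2 con.
  have pmy : pm != y by rewrite -e1y.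
  have : adjE (F1 :|: F2) x pm.
    by apply: stepx => //; rewrite adjEC.
  move=> /(cl1 _ _ xS) pmS1.
  by rewrite (disjointFr dis pmS1) in pmS2.
have a1 := stepx _ p1y xp1' axp1.
have p1S : p1 \in S1 := cl1 _ _ xS a1.
have pmS1 : pm \in S1 by apply: (conn_closed cl1) con.
case: (eqVneq pm y) => [epm|pmy].
  by have := disjointFr dis pmS1; rewrite epm yS.
have a2 : adjE (F1 :|: F2) pm x.
  by rewrite adjEC; apply: stepx => //; rewrite adjEC.
apply: nc; apply/has_cycleP; exists (x :: p1 :: p2 :: p'').
apply: (cyc_restr e1 e2 dis xS).
rewrite /cyc /= !inE !negb_or xp1 xp2 xp'' p1p2 p1p'' /=.
rewrite u2 u3 a1 /= rcons_path.
by move: pin' => /= /andP [-> ->]; rewrite a2.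
Qed.

Lemma J_sub E x y TT : TT \in Pairs E x y -> J x y TT \in subtrees ([set x; y] |: E).
Proof.
case: TT => [[S1 F1] [S2 F2]]; rewrite inE /= => /and5P [T1 T2 xS yS dis].
case/subtreesP: T1 => [/subgraphP [sF1 e1] [ne1 c1 nc1]] /=.
case/subtreesP: T2 => [/subgraphP [sF2 e2] [ne2 c2 nc2]] /=.
have dis' : [disjoint S2 & S1] by rewrite disjoint_sym.
have exy : [set y; x] = [set x; y] := setUC _ _.
rewrite /J /=; apply/subtreesP; split => /=.
  apply/subgraphP; split.
    by apply: setUS; rewrite subUset sF1 sF2.
  move=> f; rewrite in_setU1 inE => /orP [/eqP ->|/orP [fF|fF]].
  - by rewrite subUset !sub1set !inE xS yS orbT.
  - by apply: subset_trans (e1 _ fF) (subsetUl _ _).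
  - by apply: subset_trans (e2 _ fF) (subsetUr _ _).
have sub1 : F1 \subset [set x; y] |: (F1 :|: F2).
  by apply: subset_trans (subsetUl F1 F2) (subsetU1 _ _).
have sub2 : F2 \subset [set x; y] |: (F1 :|: F2).
  by apply: subset_trans (subsetUr F1 F2) (subsetU1 _ _).
have cx v : v \in S1 :|: S2 -> connect (adjE ([set x; y] |: (F1 :|: F2))) x v.
  rewrite inE => /orP [vS|vS]; first exact: connect_mono sub1 (c1 _ _ xS vS).
  apply: connect_trans (connect_mono sub2 (c2 _ _ yS vS)).
  by apply: connect1; rewrite /adjE setU11.
split.
- by apply/set0Pn; exists x; rewrite inE xS.
- move=> u v uS vS; apply: connect_trans (cx _ vS).
  by rewrite connect_symF; apply: cx.
case/has_cycleP => c cc.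
case: (boolP (x \in c)) => xc; first exact: (cyc_through xS yS dis e1 e2 nc1 xc cc).
case: (boolP (y \in c)) => yc.
  apply: (cyc_through yS xS dis' e2 e1 nc2 yc).
  by rewrite /= exy (setUC F2 F1).
case: c xc yc cc => [|h [|z p]] // xc yc cc.
have cc' : cyc (F1 :|: F2) [:: h, z & p].
  move: cc => /and3P [u s cy]; rewrite /cyc u s /=.
  have hs : {in [predC [set x; y]] &, subrel (adjE ([set x; y] |: (F1 :|: F2)))
                                              (adjE (F1 :|: F2))}.
    move=> a b /= ax bx; rewrite /adjE in_setU1 => /orP [/eqP h'|//].
    by move: ax; rewrite inE /= -h' set21.
  apply: (sub_in_path hs) cy; apply/allP => t tc.
  have tc' : t \in [:: h, z & p].
    by move: tc; rewrite in_cons mem_rcons => /orP [/eqP ->|//]; rewrite mem_head.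
  rewrite /= in_set2; apply/negP => /orP [] /eqP et.
    by move: xc; rewrite -et tc'.
  by move: yc; rewrite -et tc'.
have : adjE (F1 :|: F2) h z by move: cc' => /and3P [_ _ /andP []].
rewrite /adjE inE => /orP [hf|hf].
  have hS : h \in S1 by move: (e1 _ hf); rewrite subUset sub1set => /andP [].
  by apply: nc1; apply/has_cycleP; exists [:: h, z & p]; apply: (cyc_restr e1 e2 dis hS cc').
have hS : h \in S2 by move: (e2 _ hf); rewrite subUset sub1set => /andP [].
apply: nc2; apply/has_cycleP; exists [:: h, z & p]; apply: (cyc_restr e2 e1 dis' hS).
by rewrite setUC.
Qed.


Lemma side_eq S1 S2 F1 F2 x :
  x \in S1 -> (forall f, f \in F1 -> f \subset S1) -> (forall f, f \in F2 -> f \subset S2) ->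
  [disjoint S1 & S2] -> (forall f, f \in F2 -> f != set0) ->
  (forall u v, u \in S1 -> v \in S1 -> connect (adjE F1) u v) ->
  [set v | connect (adjE (F1 :|: F2)) x v] = S1 /\ restr (F1 :|: F2) S1 = F1.
Proof.
move=> xS e1 e2 dis ne c1; split.
  apply/setP => v; rewrite inE; apply/idP/idP => h.
    exact: conn_closed (fun u w uS a => (closed_pair e1 e2 dis uS a).2) xS h.
  exact: connect_mono (subsetUl _ _) (c1 _ _ xS h).
apply/setP => f; rewrite inE; apply/andP/idP => [[]|fF].
  rewrite inE => /orP [//|fF2] fS.
  have /set0Pn [u uf] := ne _ fF2.
  have uS1 : u \in S1 := subsetP fS _ uf.
  have uS2 : u \in S2 := subsetP (e2 _ fF2) _ uf.
  by rewrite (disjointFr dis uS1) in uS2.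
by split; [rewrite inE fF | exact: e1].
Qed.

Lemma simple_ne E f : simple E -> f \in E -> f != set0.
Proof. by move=> sE /sE [u [v [_ ->]]]; apply/set0Pn; exists u; rewrite set21. Qed.

Lemma D_J E x y TT : [set x; y] \notin E -> simple E -> TT \in Pairs E x y ->
  D x y (J x y TT) = TT.
Proof.
move=> eE sE; case: TT => [[S1 F1] [S2 F2]]; rewrite inE /= => /and5P [T1 T2 xS yS dis].
case/subtreesP: T1 => [/subgraphP [sF1 e1] [ne1 c1 nc1]] /=.
case/subtreesP: T2 => [/subgraphP [sF2 e2] [ne2 c2 nc2]] /=.
have dis' : [disjoint S2 & S1] by rewrite disjoint_sym.
rewrite /D /J /= setU1K; last first.
  rewrite inE; apply/norP; split; apply/negP => h; apply/negP: eE; rewrite negbK.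
    exact: (subsetP sF1).
  exact: (subsetP sF2).
have n1 f : f \in F1 -> f != set0 by move=> fF; apply: (simple_ne sE); apply: (subsetP sF1).
have n2 f : f \in F2 -> f != set0 by move=> fF; apply: (simple_ne sE); apply: (subsetP sF2).
have [A1 R1] := side_eq xS e1 e2 dis n2 c1.
have [A2 R2] := side_eq yS e2 e1 dis' n1 c2.
rewrite setUC in A2 R2.
by rewrite A1 R1 A2 R2.
Qed.

Lemma side_tree E F F' z : F' \subset E -> F' \subset F -> ~ has_cycle F ->
  ([set v | connect (adjE F') z v], restr F' [set v | connect (adjE F') z v])
     \in subtrees E.
Proof.
move=> sE sF noc; set A := [set v | _].
have clA u v : u \in A -> adjE F' u v -> v \in A.
  by rewrite !inE => h a; exact: connect_trans h (connect1 a).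
have zA : z \in A by rewrite inE connect0.
have sR : restr F' A \subset F' by apply/subsetP => f; rewrite inE => /andP [].
apply/subtreesP; split => /=.
  apply/subgraphP; split; first exact: subset_trans sR sE.
  by move=> f; rewrite inE => /andP [].
split.
- by apply/set0Pn; exists z.
- move=> u v uA vA.
  have uA' : connect (adjE F') z u by move: uA; rewrite inE.
  have vA' : connect (adjE F') z v by move: vA; rewrite inE.
  have cu := connect_restr clA zA uA'.
  have cv := connect_restr clA zA vA'.
  by apply: connect_trans cv; rewrite connect_symF.
- by move=> h; apply: noc; apply: has_cycle_mono h; apply: subset_trans sR sF.
Qed.

Lemma J_D E x y T : x != y -> simple E -> T \in subtrees ([set x; y] |: E) ->
  [set x; y] \in T.2 -> D x y T \in Pairs E x y /\ J x y (D x y T) = T.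
Proof.
case: T => S F xy sE /subtreesP [/subgraphP [sF eS] [ne conn noc]] /= eF.
set e := [set x; y] in sF eF *.
set F' := F :\ e.
have sF'E : F' \subset E.
  apply/subsetP => f; rewrite in_setD1 => /andP [fe fF].
  by move: (subsetP sF _ fF); rewrite in_setU1 (negbTE fe).
have sF'F : F' \subset F := subsetDl _ _.
have := eS _ eF; rewrite subUset !sub1set => /andP [xS yS].
have clS u v : u \in S -> adjE F' u v -> v \in S.
  move=> _ /(subsetP sF'F) /eS; rewrite subUset !sub1set => /andP [_ ->] //.
set A := [set v | connect (adjE F') x v].
set B := [set v | connect (adjE F') y v].
have clA u v : u \in A -> adjE F' u v -> v \in A.
  by rewrite !inE => h a; exact: connect_trans h (connect1 a).
have clB u v : u \in B -> adjE F' u v -> v \in B.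
  by rewrite !inE => h a; exact: connect_trans h (connect1 a).
have xA : x \in A by rewrite inE connect0.
have yB : y \in B by rewrite inE connect0.
have AS : A \subset S by apply/subsetP => v; rewrite inE => h; exact: conn_closed clS xS h.
have BS : B \subset S by apply/subsetP => v; rewrite inE => h; exact: conn_closed clS yS h.
have dis : [disjoint A & B].
  apply/pred0P => v /=; apply/negbTE/negP => /andP [hx hy].
  have hx' : connect (adjE F') x v by move: hx; rewrite inE.
  have hy' : connect (adjE F') y v by move: hy; rewrite inE.
  have : connect (adjE F') x y by apply: connect_trans hx' _; rewrite connect_symF.
  case/connectP => p pp; case: (shortenP pp) => p' pp' up' _ ly.
  apply: noc; exists x, p'; split => //.
  - case: p' pp' up' ly => [|z [|t p'']] //=.
      by move=> _ _ ey; move: xy; rewrite ey eqxx.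
    rewrite andbT => a _ ey; move: a; rewrite /adjE in_setD1 -ey eqxx.
    by [].
  - by apply: sub_path pp' => a b; apply: (subsetP sF'F).
  - by rewrite -ly adjEC.
have eqS : S = A :|: B.
  apply/setP => v; apply/idP/idP => [vS|]; last first.
    by rewrite inE => /orP [] h; [apply: (subsetP AS) | apply: (subsetP BS)].
  have cl u w : u \in A :|: B -> adjE F u w -> w \in A :|: B.
    move=> uAB a; case: (eqVneq [set u; w] e) => [he|hne].
      have : w \in e by rewrite -he set22.
      by rewrite in_set2 => /orP [] /eqP ->; rewrite inE ?xA ?yB ?orbT.
    have a' : adjE F' u w by rewrite /adjE in_setD1 hne.
    move: uAB; rewrite in_setU => /orP [] h.
      by rewrite in_setU (clA u w h a').
    by rewrite in_setU (clB u w h a') orbT.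
  by apply: (conn_closed cl) (conn _ _ xS vS); rewrite inE xA.
have eqF : F = e |: (restr F' A :|: restr F' B).
  apply/setP => f; rewrite in_setU1 !inE; apply/idP/idP => [fF|].
    case: (eqVneq f e) => //= fe.
    have fF' : f \in F' by rewrite in_setD1 fe.
    have [u [w [uw ef]]] := sE f (subsetP sF'E _ fF').
    have uS : u \in S by move: (eS _ fF); rewrite ef subUset sub1set => /andP [].
    have a : adjE F' u w by rewrite /adjE -ef.
    move: uS; rewrite eqS in_setU => /orP [] h; rewrite fF /=.
      by rewrite ef subUset !sub1set h (clA _ _ h a).
    by rewrite ef !subUset !sub1set h (clB _ _ h a) orbT.
  case/or3P => [/eqP ->//|/andP [/andP [_ ->]]//|/andP [/andP [_ ->]]//].
split; last by rewrite /D /J /= -/F' -/A -/B -eqS -eqF.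
rewrite /D /= -/F' -/A -/B inE /=.
rewrite (side_tree _ sF'E sF'F noc) (side_tree _ sF'E sF'F noc) xA yB.
by rewrite dis.
Qed.

Lemma sub_close E x y : x != y -> [set x; y] \notin E -> simple E ->
  subtrees ([set x; y] |: E) = subtrees E :|: [set J x y TT | TT in Pairs E x y].
Proof.
move=> xy eE sE; apply/setP => T; rewrite in_setU; apply/idP/idP => [TE|].
  case: (boolP ([set x; y] \in T.2)) => eT.
    have [P1 P2] := J_D xy sE TE eT.
    by apply/orP; right; apply/imsetP; exists (D x y T).
  apply/orP; left; case/subtreesP: TE => [/subgraphP [sF eS] t].
  apply/subtreesP; split => //; apply/subgraphP; split => //.
  apply/subsetP => f fT; have := subsetP sF _ fT; rewrite in_setU1 => /orP [/eqP e|//].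
  by move: eT; rewrite -e fT.
case/orP => [|/imsetP [TT TTin ->]]; last exact: J_sub.
by apply: sub_mono; apply: subsetU1.
Qed.

Lemma Q_close E x y (P : pred {set V}) : x != y -> [set x; y] \notin E -> simple E ->
  Q ([set x; y] |: E) P = Q E P + #|[set TT in Pairs E x y | P (J x y TT).1]|.
Proof.
move=> xy eE sE; rewrite /Q sub_close //.
have -> : [set T in subtrees E :|: [set J x y TT | TT in Pairs E x y] | P T.1] =
    [set T in subtrees E | P T.1] :|:
    [set J x y TT | TT in [set TT in Pairs E x y | P (J x y TT).1]].
  apply/setP => T; rewrite inSet !in_setU (inSet (subtrees E) (fun T => P T.1)) andb_orl; congr orb.
  apply/andP/imsetP => [[/imsetP [TT TTin ->] PT]|[TT]].
    by exists TT => //; rewrite inSet TTin.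
  by rewrite inSet => /andP [h1 h2] ->; split => //; apply/imsetP; exists TT.
rewrite cardsU.
have -> : [set T in subtrees E | P T.1] :&:
    [set J x y TT | TT in [set TT in Pairs E x y | P (J x y TT).1]] = set0.
  apply/setP => T; rewrite inE inSet in_set0; apply/negbTE/negP.
  case/andP => /andP [TE _] /imsetP [TT _ eT].
  case/subtreesP: TE => [/subgraphP [sF _] _].
  by apply/negP: eE; rewrite negbK; apply: (subsetP sF); rewrite eT /J /= setU11.
rewrite cards0 subn0 card_in_imset //.
move=> T1 T2; rewrite !inSet => /andP [h1 _] /andP [h2 _] e.
by rewrite -(D_J eE sE h1) e (D_J eE sE h2).
Qed.

End Close.


Lemma imset_filter (A B : finType) (f : A -> B) (X : {set A}) (R : pred B) :
  [set y in f @: X | R y] = f @: [set x in X | R (f x)].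
Proof.
apply/setP => y; rewrite inSet; apply/andP/imsetP => [[/imsetP [x xX ->] Rx]|[x]].
  by exists x => //; rewrite inSet xX.
by rewrite inSet => /andP [xX Rx] ->; split => //; apply/imsetP; exists x.
Qed.

Lemma disjU1 (T : finType) (C A : {set T}) y :
  [disjoint C & A :|: [set y]] = [disjoint C & A] && (y \notin C).
Proof.
by rewrite disjoint_sym disjoints_subset subUset sub1set -disjoints_subset disjoint_sym inE.
Qed.

Section Leaf.
Variable V : finType.
Implicit Types (E F : {set {set V}}) (S : {set V}).

Lemma iso_notin_e E x y : iso E y -> [set x; y] \notin E.
Proof. by move=> iy; apply/negP => /iy; rewrite set22. Qed.

Lemma Pairs_leaf E x y : x != y -> simple E -> iso E y ->
  Pairs E x y = [set (T, ([set y], set0)) | T in [set T in subtrees E | x \in T.1]].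
Proof.
move=> xy sE iy; apply/setP => TT; apply/idP/imsetP.
  case: TT => T1 T2; rewrite inE /= => /and5P [h1 h2 xT yT dis].
  by exists T1; [rewrite inSet h1 xT | rewrite (iso_tree sE iy h2 yT)].
case=> T; rewrite inSet => /andP [TE xT] ->.
rewrite inE /= TE single_tree xT set11 disjoint_sym disjoints1 /=.
exact: iso_notin sE iy TE xT xy.
Qed.

Lemma Q_leaf E x y (P : pred {set V}) : x != y -> simple E -> iso E y ->
  Q ([set x; y] |: E) P = Q E P + Q E (fun S => (x \in S) && P (S :|: [set y])).
Proof.
move=> xy sE iy; rewrite Q_close ?iso_notin_e //; congr addn.
rewrite Pairs_leaf // imset_filter card_imset; last by move=> T1 T2 [].
by apply: eq_card => T; rewrite !inSet andbA.
Qed.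

Lemma Pairs_same E v : Pairs E v v = set0.
Proof.
apply/setP => TT; rewrite inE in_set0; apply/negbTE/negP => /and5P [_ _ h1 h2 dis].
by rewrite (disjointFr dis h1) in h2.
Qed.

Lemma Pairs_all E x y (P : pred {set V}) :
  (forall TT, TT \in Pairs E x y -> P (J x y TT).1) ->
  #|[set TT in Pairs E x y | P (J x y TT).1]| = #|Pairs E x y|.
Proof.
move=> h; apply: eq_card => TT; rewrite inSet.
by case: (boolP (TT \in Pairs E x y)) => // /h ->.
Qed.

Lemma Pairs_leaf2 E x y u : x != y -> u != y -> simple E -> iso E y ->
  #|Pairs ([set x; y] |: E) u y| = Q E (fun S => u \in S) + #|Pairs E u x|.
Proof.
move=> xy uy sE iy.
have eE := iso_notin_e x iy.
set f1 := fun T : tp V => (T, ([set y], (set0 : {set {set V}}))).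
set f2 := fun TT : tp V * tp V => (TT.1, J x y (TT.2, ([set y], (set0 : {set {set V}})))).
have subE' T : T \in subtrees ([set x; y] |: E) ->
    T \in subtrees E \/ exists2 A, A \in subtrees E /\ x \in A.1 & T = J x y (f1 A).
  rewrite sub_close // in_setU => /orP [h|/imsetP [TT]]; first by left.
  rewrite Pairs_leaf // => /imsetP [A]; rewrite inSet => /andP [AE xA] -> ->.
  by right; exists A.
have Jin A : A \in subtrees E -> x \in A.1 -> J x y (f1 A) \in subtrees ([set x; y] |: E).
  move=> AE xA; apply: J_sub; rewrite Pairs_leaf //; apply/imsetP; exists A => //.
  by rewrite inSet AE xA.
have yJ A : y \in (J x y (f1 A)).1 by rewrite /J /= inE set11 orbT.
have notiny T z : T \in subtrees E -> z \in T.1 -> z != y -> y \notin T.1.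
  by move=> TE zT zy; exact: iso_notin sE iy TE zT zy.
have -> : Pairs ([set x; y] |: E) u y =
    f1 @: [set T in subtrees E | u \in T.1] :|: f2 @: Pairs E u x.
  apply/setP => TT; rewrite in_setU; apply/idP/orP.
    case: TT => T1 T2; rewrite inE /= => /and5P [h1 h2 uT yT dis].
    have T1E : T1 \in subtrees E.
      case: (subE' _ h1) => // [[A _ eA]].
      by move: dis; rewrite eA => /disjointFr /(_ (yJ A)); rewrite yT.
    case: (subE' _ h2) => [T2E|[A [AE xA] eA]].
      left; apply/imsetP; exists T1; first by rewrite inSet T1E uT.
      by rewrite /f1 (iso_tree sE iy T2E yT).
    right; apply/imsetP; exists (T1, A); last by rewrite eA.
    rewrite inE /= T1E AE uT xA /=.
    by move: dis; rewrite eA /J /= disjU1 => /andP [].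
  case=> /imsetP [TT0].
    rewrite inSet => /andP [TE uT] ->.
    rewrite inE /= (sub_mono (subsetU1 _ _) TE) single_tree uT set11 /=.
    by rewrite disjoint_sym disjoints1 (notiny _ _ TE uT uy).
  case: TT0 => T1 A; rewrite inE /= => /and5P [h1 h2 uT xA dis] ->.
  rewrite inE /= (sub_mono (subsetU1 _ _) h1) Jin //= uT.
  rewrite /J /= inE set11 orbT /= disjU1 dis /=.
  exact: (notiny _ _ h1 uT uy).
rewrite cardsU.
have -> : f1 @: [set T in subtrees E | u \in T.1] :&: f2 @: Pairs E u x = set0.
  apply/setP => TT; rewrite inE in_set0; apply/negbTE/negP.
  case/andP => /imsetP [T _ ->] /imsetP [TT' _] /(congr1 (fun z => z.2.2)).
  rewrite /= => /setP /(_ [set x; y]); rewrite in_set0 /J /=.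
  by rewrite setU11.
have inj1 : injective f1 by move=> T1 T2 /(congr1 fst).
rewrite cards0 subn0 (card_imset _ inj1).
congr addn.
rewrite card_in_imset //.
move=> [T1 A] [T1' A'] H H'.
move: H; rewrite inE /= => /and5P [_ h1 _ xA _].
move: H'; rewrite inE /= => /and5P [_ h1' _ xA' _] e.
have eT : T1 = T1' := congr1 fst e.
have eJ : J x y (f1 A) = J x y (f1 A') := congr1 snd e.
rewrite eT.
have P1 : f1 A \in Pairs E x y.
  by rewrite Pairs_leaf //; apply/imsetP; exists A => //; rewrite inSet h1 xA.
have P2 : f1 A' \in Pairs E x y.
  by rewrite Pairs_leaf //; apply/imsetP; exists A' => //; rewrite inSet h1' xA'.
have := D_J eE sE P1; rewrite eJ (D_J eE sE P2).
by case=> ->.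
Qed.

End Leaf.


Lemma aux2 c h k : c + 2 * k * h + k * (k - 1) + 2 * (h + k) =
  c + 2 * k.+1 * h + k.+1 * (k.+1 - 1).
Proof. nia. Qed.

Lemma aux3 h k : h * k.+1 + h = h * k.+2.
Proof. nia. Qed.

Lemma aux1 n : 2 * n + n * (n - 1) = n * (n + 1).
Proof. nia. Qed.

Section Concrete.
Variables (a b : nat) (d : 'I_(a + b)).
Hypothesis a3 : 3 <= a.
Local Notation V := ('I_(a + b)).

Definition lab (i : nat) : V := insubd d i.

Lemma val_lab i : i < a + b -> val (lab i) = i.
Proof. by move=> h; rewrite /lab val_insubd h. Qed.

Lemma lab_eq i j : i < a + b -> j < a + b -> (lab i == lab j) = (i == j).
Proof. by move=> hi hj; rewrite -val_eqE /= !val_lab. Qed.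

Fixpoint PE k : {set {set V}} :=
  if k is k'.+1 then (if k' is k''.+1 then [set lab k''; lab k'] |: PE k' else set0)
  else set0.

Definition pp k := if k is k'.+1 then a + k' else 0.
Definition Cy := [set lab 0; lab a.-1] |: PE a.
Fixpoint G k := if k is k'.+1 then [set lab (pp k'); lab (a + k')] |: G k' else Cy.

Definition bnd (E : {set {set V}}) m :=
  forall f, f \in E -> exists i j, [/\ i != j, i < m, j < m & f = [set lab i; lab j]].

Lemma bnd_simple E m : m <= a + b -> bnd E m -> simple E.
Proof.
move=> mab bE f /bE [i [j [ij im jm ->]]]; exists (lab i), (lab j); split => //.
rewrite lab_eq //; lia.
Qed.

Lemma bnd_iso E m j : m <= j -> j < a + b -> bnd E m -> iso E (lab j).
Proof.
move=> mj jab bE f /bE [i [i' [_ im i'm ->]]]; rewrite in_set2 !lab_eq; lia.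
Qed.

Lemma bnd_add E m i j : bnd E m -> i != j -> i < m -> j < m ->
  bnd ([set lab i; lab j] |: E) m.
Proof.
move=> bE ij im jm f; rewrite in_setU1 => /orP [/eqP ->|/bE //].
by exists i, j.
Qed.

Lemma bnd_mono E m m' : m <= m' -> bnd E m -> bnd E m'.
Proof.
move=> mm bE f /bE [i [j [ij im jm ->]]]; exists i, j; split => //; lia.
Qed.

Lemma PE_S k : PE k.+2 = [set lab k; lab k.+1] |: PE k.+1.
Proof. by []. Qed.

Lemma memPE k f : f \in PE k <-> exists i, i.+1 < k /\ f = [set lab i; lab i.+1].
Proof.
elim: k => [|[|k] IH].
- by rewrite inE; split => // [[i []]].
- by rewrite inE; split => // [[i []]].
rewrite PE_S in_setU1; split.
  case/orP => [/eqP ->|/IH [i [ik ->]]]; first by exists k.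
  by exists i; split => //; lia.
case=> i [ik fe]; case: (ltnP i.+1 k.+1) => h.
  by apply/orP; right; apply/IH; exists i.
by rewrite fe (_ : i = k) ?eqxx //; lia.
Qed.

Lemma bnd_PE k : bnd (PE k) k.
Proof. by move=> f /memPE [i [ik ->]]; exists i, i.+1; split => //; lia. Qed.

Lemma memCy f : f \in Cy <->
  f = [set lab 0; lab a.-1] \/ exists i, i.+1 < a /\ f = [set lab i; lab i.+1].
Proof.
rewrite /Cy in_setU1; split.
  by case/orP => [/eqP ->|/memPE h]; [left|right].
by case=> [->|/memPE ->]; rewrite ?eqxx ?orbT.
Qed.

Lemma bnd_Cy : bnd Cy a.
Proof.
apply: bnd_add; [exact: bnd_PE | |lia|lia]; apply/eqP; lia.
Qed.

Lemma G_S k : G k.+1 = [set lab (pp k); lab (a + k)] |: G k.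
Proof. by []. Qed.

Lemma memG k f : f \in G k <->
  f \in Cy \/ exists k', k' < k /\ f = [set lab (pp k'); lab (a + k')].
Proof.
elim: k => [|k IH].
  by split; [left | case => // [[k' []]]].
rewrite G_S in_setU1; split.
  case/orP => [/eqP ->|/IH [h|[k' [kk ->]]]]; first by right; exists k.
    by left.
  by right; exists k'; split => //; lia.
case=> [h|[k' [kk fe]]]; first by apply/orP; right; apply/IH; left.
case: (ltnP k' k) => h.
  by apply/orP; right; apply/IH; right; exists k'.
by rewrite fe (_ : k' = k) ?eqxx //; lia.
Qed.

Lemma pp_lt k : pp k < a + k.
Proof. by case: k => /= [|k]; lia. Qed.

Lemma bnd_G k : bnd (G k) (a + k).
Proof.
elim: k => [|k IH]; first by rewrite addn0; exact: bnd_Cy.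
rewrite G_S.
apply: bnd_add.
- by apply: bnd_mono IH; lia.
- by apply/eqP; have := pp_lt k; lia.
- by have := pp_lt k; lia.
- lia.
Qed.


Lemma path_counts k : 0 < k -> k <= a ->
  [/\ 2 * Q (PE k) (fun _ => true) = 2 * (a + b) + k * (k - 1),
      Q (PE k) (fun S => lab k.-1 \in S) = k,
      Q (PE k) (fun S => lab 0 \in S) = k,
      Q (PE k) (fun S => (lab k.-1 \in S) && (lab 0 \in S)) = 1 &
      2 * #|Pairs (PE k) (lab 0) (lab k.-1)| = k * (k - 1)].
Proof.
elim: k => [//|[|k] IH] _ ka.
  have s0 : simple (PE 1) by move=> f; rewrite inE.
  have i0 w : iso (PE 1) w by move=> f; rewrite inE.
  have q0 : Q (PE 1) (fun S => lab 0 \in S) = 1.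
    transitivity (Q (PE 1) (fun S => (lab 0 \in S) && true)).
      by apply: eq_Q => S; rewrite andbT.
    by rewrite Q_isoP.
  split => //=.
  - by rewrite Q_all Q_empty card_ord; lia.
  - by rewrite Q_isoP // set11.
  - by rewrite Pairs_same cards0.
have [h1 h2 h3 h4 h5] := IH isT (ltnW ka).
rewrite -[k.+1.-1]/k in h2 h4 h5.
have kab : k.+1 < a + b by lia.
have xy : lab k != lab k.+1 by rewrite lab_eq; lia.
have x0 : lab 0 != lab k.+1 by rewrite lab_eq; lia.
have sE : simple (PE k.+1) by apply: (bnd_simple (m := k.+1)); [lia | exact: bnd_PE].
have iy : iso (PE k.+1) (lab k.+1) by apply: (bnd_iso (m := k.+1)) => //; exact: bnd_PE.
have t1 : Q (PE k.+2) (fun _ => true) =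
    Q (PE k.+1) (fun _ => true) + Q (PE k.+1) (fun S => lab k \in S).
  by rewrite PE_S Q_leaf //; congr addn; apply: eq_Q => S; rewrite andbT.
have t2 : Q (PE k.+2) (fun S => lab k.+1 \in S) = 1 + Q (PE k.+1) (fun S => lab k \in S).
  rewrite PE_S Q_leaf //; congr addn.
    transitivity (Q (PE k.+1) (fun S => (lab k.+1 \in S) && true)).
      by apply: eq_Q => S; rewrite andbT.
    by rewrite Q_isoP.
  by apply: eq_Q => S; rewrite in_setU set11 orbT andbT.
have t3 : Q (PE k.+2) (fun S => lab 0 \in S) = Q (PE k.+1) (fun S => lab 0 \in S) +
    Q (PE k.+1) (fun S => (lab k \in S) && (lab 0 \in S)).
  rewrite PE_S Q_leaf //; congr addn; apply: eq_Q => S.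
  by rewrite in_setU in_set1 (negbTE x0) orbF.
have t4 : Q (PE k.+2) (fun S => (lab k.+1 \in S) && (lab 0 \in S)) =
    Q (PE k.+1) (fun S => (lab k \in S) && (lab 0 \in S)).
  rewrite PE_S Q_leaf // Q_isoP // in_set1 (negbTE x0) add0n; apply: eq_Q => S.
  by rewrite !in_setU !in_set1 eqxx orbT (negbTE x0) orbF.
have t5 : #|Pairs (PE k.+2) (lab 0) (lab k.+1)| =
    Q (PE k.+1) (fun S => lab 0 \in S) + #|Pairs (PE k.+1) (lab 0) (lab k)|.
  by rewrite PE_S Pairs_leaf2.
rewrite -[k.+2.-1]/(k.+1) t1 t2 t3 t4 t5 h2 h3 h4; split; nia.
Qed.

Lemma cyc_counts : [/\ 2 * Q Cy (fun _ => true) = 2 * (a + b) + 2 * (a * (a - 1)) &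
  2 * Q Cy (fun S => lab 0 \in S) = a * (a + 1)].
Proof.
have a0 : 0 < a by lia.
have [h1 h2 h3 h4 h5] := path_counts a0 (leqnn a).
have xy : lab 0 != lab a.-1 by rewrite lab_eq; lia.
have sE : simple (PE a) by apply: (bnd_simple (m := a)); [lia | exact: bnd_PE].
have eE : [set lab 0; lab a.-1] \notin PE a.
  apply/negP => /memPE [i [ia e]].
  have : lab a.-1 \in [set lab i; lab i.+1] by rewrite -e set22.
  have : lab 0 \in [set lab i; lab i.+1] by rewrite -e set21.
  by rewrite !in_set2 !lab_eq; lia.
have allx TT : TT \in Pairs (PE a) (lab 0) (lab a.-1) -> lab 0 \in (J (lab 0) (lab a.-1) TT).1.
  by rewrite inE => /and5P [_ _ h _ _]; rewrite /J /= inE h.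
rewrite /Cy !Q_close // (Pairs_all (P := fun S => lab 0 \in S)) //.
have -> : #|[set TT in Pairs (PE a) (lab 0) (lab a.-1) | true]| = #|Pairs (PE a) (lab 0) (lab a.-1)|.
  by apply: eq_card => TT; rewrite inSet andbT.
split; rewrite mulnDr ?h1 ?h5; try rewrite h3; [lia | exact: aux1].
Qed.

Lemma pend_counts k : k <= b ->
  let h := Q Cy (fun S => lab 0 \in S) in
  [/\ 2 * Q (G k) (fun _ => true) = 2 * Q Cy (fun _ => true) + 2 * k * h + k * (k - 1),
      Q (G k) (fun S => lab (pp k) \in S) = h + k,
      Q (G k) (fun S => lab 0 \in S) = h * k.+1 &
      Q (G k) (fun S => (lab (pp k) \in S) && (lab 0 \in S)) = h].
Proof.
move=> + h; elim: k => [|k IH] kb.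
  split => /=; rewrite ?addn0 ?muln1 ?muln0 //.
  by apply: eq_Q => S; rewrite andbb.
have [h1 h2 h3 h4] := IH (ltnW kb).
have ppk := pp_lt k.
have xy : lab (pp k) != lab (a + k) by rewrite lab_eq; lia.
have x0 : lab 0 != lab (a + k) by rewrite lab_eq; lia.
have sE : simple (G k) by apply: (bnd_simple (m := a + k)); [lia | exact: bnd_G].
have iy : iso (G k) (lab (a + k)) by apply: (bnd_iso (m := a + k)); [lia | lia | exact: bnd_G].
have t1 : Q (G k.+1) (fun _ => true) =
    Q (G k) (fun _ => true) + Q (G k) (fun S => lab (pp k) \in S).
  by rewrite G_S Q_leaf //; congr addn; apply: eq_Q => S; rewrite andbT.
have t2 : Q (G k.+1) (fun S => lab (a + k) \in S) = 1 + Q (G k) (fun S => lab (pp k) \in S).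
  rewrite G_S Q_leaf //; congr addn.
    transitivity (Q (G k) (fun S => (lab (a + k) \in S) && true)).
      by apply: eq_Q => S; rewrite andbT.
    by rewrite Q_isoP.
  by apply: eq_Q => S; rewrite in_setU set11 orbT andbT.
have t3 : Q (G k.+1) (fun S => lab 0 \in S) = Q (G k) (fun S => lab 0 \in S) +
    Q (G k) (fun S => (lab (pp k) \in S) && (lab 0 \in S)).
  rewrite G_S Q_leaf //; congr addn; apply: eq_Q => S.
  by rewrite in_setU in_set1 (negbTE x0) orbF.
have t4 : Q (G k.+1) (fun S => (lab (a + k) \in S) && (lab 0 \in S)) =
    Q (G k) (fun S => (lab (pp k) \in S) && (lab 0 \in S)).
  rewrite G_S Q_leaf // Q_isoP // in_set1 (negbTE x0) add0n; apply: eq_Q => S.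
  by rewrite !in_setU !in_set1 eqxx orbT (negbTE x0) orbF.
rewrite /= t1 t2 t3 t4 h2 h3 h4.
split; [rewrite mulnDr h1; exact: aux2 | lia | exact: aux3 | by []].
Qed.

Lemma cpp_G : cpp_edges a b = G b.
Proof.
apply/setP => f; rewrite inE; apply/existsP/idP.
  case=> x /existsP [y /andP [/eqP fe adj]]; apply/memG.
  have -> : f = [set lab x; lab y] by rewrite fe /lab !valKd.
  have xab := ltn_ord x; have yab := ltn_ord y.
  move: adj; rewrite /cpp_adj.
  case/or3P => [/and3P [xa ya /eqP yx]|/and3P [/eqP x0 /eqP ya b0]|/and3P [ax /eqP yx yab']].
  - left; apply/memCy; case: (ltnP x.+1 a) => h.
      by right; exists x; split => //; rewrite yx modn_small.
    have ex : (x : nat) = a.-1 by lia.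
    have ey : (y : nat) = 0 by rewrite yx (_ : x.+1 = a) ?modnn //; lia.
    by left; rewrite ex ey setUC.
  - right; exists 0; split; first exact: b0.
    by rewrite /= x0 ya addn0.
  - right; exists (x - a).+1; split; first lia.
    have e1 : a + (x - a) = x by lia.
    have e2 : a + (x - a).+1 = x.+1 by lia.
    by rewrite /= yx e1 e2.
case/memG => [/memCy [fe|[i [ia fe]]]|[k' [kb fe]]].
- exists (lab a.-1); apply/existsP; exists (lab 0).
  have h1 : a.-1 < a + b by lia.
  have h2 : 0 < a + b by lia.
  rewrite fe setUC eqxx /= /cpp_adj !val_lab //.
  apply/orP; left; rewrite prednK ?modnn; lia.
- exists (lab i); apply/existsP; exists (lab i.+1).
  have h1 : i < a + b by lia.
  have h2 : i.+1 < a + b by lia.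
  rewrite fe eqxx /= /cpp_adj !val_lab //.
  apply/orP; left; rewrite modn_small; lia.
- case: k' kb fe => [|k] kb fe.
    exists (lab 0); apply/existsP; exists (lab a).
    have h1 : a < a + b by lia.
    have h2 : 0 < a + b by lia.
    rewrite fe addn0 eqxx /= /cpp_adj !val_lab //.
    apply/orP; right; apply/orP; left; lia.
  exists (lab (a + k)); apply/existsP; exists (lab (a + k.+1)).
  have h1 : a + k < a + b by lia.
  have h2 : a + k.+1 < a + b by lia.
  rewrite fe eqxx /= /cpp_adj !val_lab //.
  apply/orP; right; apply/orP; right; lia.
Qed.

Lemma final_counts : val d = 0 ->
  2 * n_sub_at (cpp_edges a b) d = a * (a + 1) * (b + 1) /\
  2 * n_sub (cpp_edges a b) =
    2 * (a + b) + 2 * (a * (a - 1)) + b * (a * (a + 1)) + b * (b - 1) + 2.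
Proof.
move=> d0.
have l0 : lab 0 = d by apply: val_inj; rewrite val_lab ?d0 //; lia.
have [c1 c2] := cyc_counts.
have [p1 p2 p3 p4] := pend_counts (leqnn b).
rewrite cpp_G /n_sub /n_sub_at -l0 -Q_all.
change #|[set SF in subtrees (G b) | lab 0 \in SF.1]| with
  (Q (G b) (fun S => lab 0 \in S)).
rewrite p3; split.
  by rewrite mulnA c2 !addn1.
have p1' : 2 * Q (G b) xpredT =
   2 * Q Cy (fun _ => true) + 2 * b * Q Cy (fun S => lab 0 \in S) + b * (b - 1) := p1.
rewrite mulnDr p1' c1 (mulnC 2 b) -mulnA c2; lia.
Qed.

End Concrete.

Lemma sA l1 l2 : 0 < l2 -> l2 < l1 -> l2 * (l2 + 1) * (l1 + 1) < l1 * (l1 + 1) * (l2 + 1).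
Proof. move=> h1 h2. rewrite mulnAC ltn_pmul2r ?addn1 // ltn_pmul2r ?addn1 //. Qed.
Lemma sN a b : 3 <= b -> b < a ->
  2 * (b + a) + 2 * (b * (b - 1)) + a * (b * (b + 1)) + a * (a - 1) + 2 <
  2 * (a + b) + 2 * (a * (a - 1)) + b * (a * (a + 1)) + b * (b - 1) + 2.
Proof.
move=> h1 h2.
have hX : b * (b - 1) <= a * (a - 1) by apply: leq_mul; lia.
have hP : a * (b * (b + 1)) < b * (a * (a + 1)).
  rewrite mulnCA ltn_pmul2l; last lia.
  rewrite ltn_pmul2l; lia.
lia.
Qed.

Lemma arith l1 l2 A1 A2 N1 N2 : 3 <= l2 -> l2 <= l1 ->
  2 * A1 = l1 * (l1 + 1) * (l2 + 1) -> 2 * A2 = l2 * (l2 + 1) * (l1 + 1) ->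
  2 * N1 = 2 * (l1 + l2) + 2 * (l1 * (l1 - 1)) + l2 * (l1 * (l1 + 1)) + l2 * (l2 - 1) + 2 ->
  2 * N2 = 2 * (l2 + l1) + 2 * (l2 * (l2 - 1)) + l1 * (l2 * (l2 + 1)) + l1 * (l1 - 1) + 2 ->
  [/\ N2 <= N1, A2 <= A1, N1 = N2 <-> l1 = l2 & A1 = A2 <-> l1 = l2].
Proof.
move=> h3 h21 hA1 hA2 hN1 hN2.
case: (ltngtP l2 l1) => [lt|gt|eq]; last first.
- subst l2.
  have eA : A1 = A2 by lia.
  have eN : N1 = N2 by lia.
  by rewrite eA eN; split.
- lia.
have sa : 2 * A2 < 2 * A1 by rewrite hA1 hA2; apply: sA; lia.
have sn : 2 * N2 < 2 * N1 by rewrite hN1 hN2; apply: sN.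
split; [lia | lia | split => h; lia | split => h; lia].
Qed.

Unset Implicit Arguments.

Theorem lemma7 (l1 l2 : nat) (u : 'I_(l1 + l2)) (v : 'I_(l2 + l1)) :
  3 <= l2 -> l2 <= l1 -> nat_of_ord u = 0 -> nat_of_ord v = 0 ->
  [/\ n_sub (cpp_edges l2 l1) <= n_sub (cpp_edges l1 l2),
      n_sub_at (cpp_edges l2 l1) v <= n_sub_at (cpp_edges l1 l2) u,
      n_sub (cpp_edges l1 l2) = n_sub (cpp_edges l2 l1) <-> l1 = l2 &
      n_sub_at (cpp_edges l1 l2) u = n_sub_at (cpp_edges l2 l1) v <-> l1 = l2].
Proof.
move=> h3 h21 u0 v0.
have l13 : 3 <= l1 by apply: leq_trans h3 h21.
have [A1 N1] := @final_counts l1 l2 u l13 u0.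
have [A2 N2] := @final_counts l2 l1 v h3 v0.
exact: arith h3 h21 A1 A2 N1 N2.
Qed.
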